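(* The Zorn vector matrix algebra $\mathfrak{Z}(\mathbb{Q})$ over $\mathbb{Q}$ does not have the hyperbolic property.
   Context: $\mathfrak{Z}(R)$ is the set of matrices $\begin{pmatrix}a&v\\ w&b\end{pmatrix}$ with $a,b\in R$, $v,w\in R^3$, with entrywise addition and product $\begin{pmatrix}a&v\\ w&b\end{pmatrix}\begin{pmatrix}a'&v'\\ w'&b'\end{pmatrix}=\begin{pmatrix}aa'+v\cdot w' & av'+b'v-w\times w'\\ a'w+bw'+v\times v' & bb'+w\cdot v'\end{pmatrix}$ (dot and cross products in $R^3$). A $\mathbb{Z}$-order of a finite-dimensional $\mathbb{Q}$-algebra is a unital subring finitely generated as a $\mathbb{Z}$-module spanning the algebra over $\mathbb{Q}$; its units form a loop. The algebra has the hyperbolic property if some $\mathbb{Z}$-order has a unit loop containing no subgroup isomorphic to $\mathbb{Z}^2$. *)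

(* Defs.v *)
From HB Require Import structures.
From mathcomp Require Import all_boot all_order all_algebra.
Set Implicit Arguments. Unset Strict Implicit. Unset Printing Implicit Defensive.
Import Order.TTheory GRing.Theory Num.Theory.
Local Open Scope ring_scope.

(* Zorn vector matrix algebra Z(R): elements (a, v, w, b) standing for
   the matrix [[a, v], [w, b]] with a b : R, v w : R^3 (row vectors). *)
Definition zorn (R : comNzRingType) : Type :=
  (R * 'rV[R]_3 * 'rV[R]_3 * R)%type.

Section Zorn.
Variable R : comNzRingType.

Definition dot3 (v w : 'rV[R]_3) : R := \sum_(i < 3) v 0 i * w 0 i.

Definition cross3 (v w : 'rV[R]_3) : 'rV[R]_3 :=
  let x k := v 0 (inord k) in let y k := w 0 (inord k) in
  \row_(i < 3) (if val i == 0%N then x 1%N * y 2%N - x 2%N * y 1%N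
                else if val i == 1%N then x 2%N * y 0%N - x 0%N * y 2%N
                else x 0%N * y 1%N - x 1%N * y 0%N).

Definition zorn_a (z : zorn R) : R := z.1.1.1.
Definition zorn_v (z : zorn R) : 'rV[R]_3 := z.1.1.2.
Definition zorn_w (z : zorn R) : 'rV[R]_3 := z.1.2.
Definition zorn_b (z : zorn R) : R := z.2.

Definition zorn_mul (z z' : zorn R) : zorn R :=
  let a := zorn_a z in let v := zorn_v z in let w := zorn_w z in let b := zorn_b z in
  let a' := zorn_a z' in let v' := zorn_v z' in let w' := zorn_w z' in
  let b' := zorn_b z' in
  (a * a' + dot3 v w',
   a *: v' + b' *: v - cross3 w w',
   a' *: w + b *: w' + cross3 v v',
   b * b' + dot3 w v').

Definition zorn_one : zorn R := (1, 0, 0, 1).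

Definition zorn_scale (r : R) (z : zorn R) : zorn R :=
  (r * zorn_a z, r *: zorn_v z, r *: zorn_w z, r * zorn_b z).
End Zorn.

Definition zornQ := zorn rat.

Definition is_Zorder (O : pred zornQ) : Prop :=
  [/\ zorn_one rat \in O,
      (0 : zornQ) \in O,
      (forall x y, x \in O -> y \in O -> x + y \in O),
      (forall x, x \in O -> - x \in O) &
      (forall x y, x \in O -> y \in O -> zorn_mul x y \in O)] /\
  [/\
      (exists s : seq zornQ, all (fun x => x \in O) s /\
         forall x, x \in O ->
           exists c : 'I_(size s) -> int, x = \sum_(i < size s) s`_i *~ c i) &
      (forall x : zornQ, exists s : seq zornQ, all (fun x => x \in O) s /\
           exists c : 'I_(size s) -> rat, x = \sum_(i < size s) zorn_scale (c i) s`_i)].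

Definition is_unit_of (O : pred zornQ) (u : zornQ) : Prop :=
  u \in O /\ exists2 v, v \in O & zorn_mul u v = zorn_one rat /\ zorn_mul v u = zorn_one rat.

Definition unit_loop_has_Z2 (O : pred zornQ) : Prop :=
  exists f : int * int -> zornQ,
    [/\ injective f,
        (forall p, is_unit_of O (f p)) &
        (forall p q, f (p.1 + q.1, p.2 + q.2) = zorn_mul (f p) (f q))].

Definition zornQ_hyperbolic : Prop :=
  exists O : pred zornQ, is_Zorder O /\ ~ unit_loop_has_Z2 O.

(* Main.v *)
Require Import Defs.
From mathcomp Require Import all_boot all_order all_algebra.
Import GRing.Theory.
Local Open Scope ring_scope.

Lemma iv0 : val (inord 0 : 'I_3) = 0%N. Proof. exact: inordK. Qed.
Lemma iv1 : val (inord 1 : 'I_3) = 1%N. Proof. exact: inordK. Qed.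
Lemma iv2 : val (inord 2 : 'I_3) = 2%N. Proof. exact: inordK. Qed.

Definition vec (x y z : rat) : 'rV[rat]_3 :=
  \row_(i < 3) (if val i == 0%N then x else if val i == 1%N then y else z).

Lemma vec_dot x y z x' y' z' : dot3 (vec x y z) (vec x' y' z') = x*x'+y*y'+z*z'.
Proof. by rewrite /dot3 !big_ord_recr big_ord0 /= !mxE /= add0r. Qed.

Lemma vec_cross x y z x' y' z' : cross3 (vec x y z) (vec x' y' z') =
  vec (y*z' - z*y') (z*x' - x*z') (x*y' - y*x').
Proof.
apply/rowP => i; rewrite /cross3 !mxE ?iv0 ?iv1 ?iv2 //=.
Qed.

Lemma vec_scale r x y z : r *: vec x y z = vec (r*x) (r*y) (r*z).
Proof. by apply/rowP => i; rewrite !mxE; case: ifP => //; case: ifP. Qed.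

Lemma vec_add x y z x' y' z' : vec x y z + vec x' y' z' = vec (x+x') (y+y') (z+z').
Proof. by apply/rowP => i; rewrite !mxE; case: ifP => //; case: ifP. Qed.

Lemma vec_opp x y z : - vec x y z = vec (-x) (-y) (-z).
Proof. by apply/rowP => i; rewrite !mxE; case: ifP => //; case: ifP. Qed.

Lemma vec0 : (0 : 'rV[rat]_3) = vec 0 0 0.
Proof. by apply/rowP => i; rewrite !mxE; case: ifP => //; case: ifP. Qed.

Lemma vec_inj x y z x' y' z' : vec x y z = vec x' y' z' -> [/\ x = x', y = y' & z = z'].
Proof.
move/rowP=> H; have := H ord0; have := H (inord 1); have := H (inord 2).
by rewrite !mxE ?iv0 ?iv1 ?iv2 //=.
Qed.

Lemma pairzE (M1 M2 : zmodType) (x : M1 * M2) (m : int) :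
  x *~ m = (x.1 *~ m, x.2 *~ m).
Proof.
case: m => n; first by rewrite -!pmulrn pairMnE.
by rewrite !NegzE !mulrNz -!pmulrn pairMnE.
Qed.

Lemma zornzE (z : zornQ) (m : int) :
  z *~ m = (z.1.1.1 *~ m, z.1.1.2 *~ m, z.1.2 *~ m, z.2 *~ m).
Proof.
by rewrite (@pairzE _ _ z) (@pairzE _ _ z.1) (@pairzE _ _ z.1.1).
Qed.

Lemma den_num (r : rat) : (denq r)%:~R * r = (numq r)%:~R.
Proof. rewrite numqE. apply: (@mulrC rat). Qed.
Lemma hsG (V : lmodType rat) (v : V) (r : rat) : (r *: v) *~ denq r = v *~ numq r.
Proof. by rewrite -[(r *: v) *~ _]scaler_int -[v *~ _]scaler_int scalerA den_num. Qed.

Lemma hmG (a r : rat) : (r * a) *~ denq r = a *~ numq r.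
Proof. by rewrite -[(r * a) *~ _]mulrzl -[a *~ _]mulrzl mulrA den_num. Qed.

Lemma scale_den (y : zornQ) (r : rat) :
  zorn_scale r y *~ denq r = y *~ numq r.
Proof.
rewrite [LHS]zornzE [RHS]zornzE.
congr (_,_,_,_); first [exact: hmG | exact: hsG].
Qed.

Lemma vec_z x y z (m : int) : vec x y z *~ m = vec (m%:~R * x) (m%:~R * y) (m%:~R * z).
Proof. by rewrite -[vec x y z *~ m]scaler_int vec_scale. Qed.

Definition fZ (a b : rat) (p : int * int) : zornQ :=
  (1, vec (p.1%:~R * a) 0 0, vec 0 (p.2%:~R * b) 0, 1).

Lemma fZ_mul a b p q : fZ a b (p.1 + q.1, p.2 + q.2) = zorn_mul (fZ a b p) (fZ a b q).
Proof.
rewrite /zorn_mul /fZ /zorn_a /zorn_v /zorn_w /zorn_b /=.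
rewrite !vec_dot !vec_cross !vec_scale !vec_opp !vec_add.
rewrite !(mulr0, mul0r, mul1r, addr0, add0r, subr0, oppr0, intrD, mulrDl).
by rewrite [_ + p.1%:~R * a]addrC.
Qed.

Lemma fZ0 a b : fZ a b (0, 0) = zorn_one rat.
Proof. by rewrite /fZ /zorn_one /= !mul0r vec0. Qed.

Lemma fZ_inj a b : a != 0 -> b != 0 -> injective (fZ a b).
Proof.
move=> a0 b0 [m n] [m' n'] /= [] /vec_inj [h1 _ _] /vec_inj [_ h2 _].
move/(mulIf a0)/intr_inj: h1 => ->.
by move/(mulIf b0)/intr_inj: h2 => ->.
Qed.


Lemma addzE (x y : zornQ) : x + y =
  (x.1.1.1 + y.1.1.1, x.1.1.2 + y.1.1.2, x.1.2 + y.1.2, x.2 + y.2).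
Proof. by []. Qed.

Lemma fZ_dec a b (p : int * int) :
  fZ a b p = zorn_one rat + (0, vec a 0 0, vec 0 0 0, 0) *~ p.1
             + (0, vec 0 0 0, vec 0 b 0, 0) *~ p.2.
Proof.
rewrite [(0, vec a 0 0, _, _) *~ _]zornzE [(0, vec 0 0 0, _, _) *~ _]zornzE.
rewrite /fZ /zorn_one /=.
rewrite !mul0rz !vec_z !(mulr0, addr0, add0r) !addzE /= vec0 !vec_add !(addr0, add0r). reflexivity.
Qed.

Theorem proposition3p2 : ~ zornQ_hyperbolic.
Proof.
case=> O [[[H1 H0 HD HN HM] [_ Hspan]] HnZ]; apply: HnZ.
have HMn : forall z n, z \in O -> z *+ n \in O.
  move=> z n Hz; elim: n => [|n IH]; first by rewrite mulr0n.
  by rewrite mulrS HD.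
have HMz : forall z (m : int), z \in O -> z *~ m \in O.
  move=> z [] n Hz; first by rewrite -pmulrn HMn.
  by rewrite NegzE mulrNz HN // -pmulrn HMn.
have Hclr : forall x : zornQ, exists2 D : int, D != 0 & x *~ D \in O.
  move=> x; case: (Hspan x) => s [Hs [c ->]].
  apply: (big_ind (fun x => exists2 D : int, D != 0 & x *~ D \in O)).
  - by exists 1 => //; rewrite mul0rz.
  - move=> x1 x2 [D1 nz1 h1] [D2 nz2 h2]; exists (D1 * D2).
      by rewrite mulf_neq0.
    rewrite mulrzDl mulrzA; apply: (HD _ _); first exact: (HMz _ _).
    by rewrite mulrC mulrzA; apply: (HMz _ _).
  - move=> i _; exists (denq (c i)); first by rewrite denq_neq0.
    rewrite scale_den; apply: (HMz _ _).
    exact: (all_nthP 0 Hs i (ltn_ord i)).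
case: (Hclr (0, vec 1 0 0, vec 0 0 0, 0)) => D1 nz1 h1.
case: (Hclr (0, vec 0 0 0, vec 0 1 0, 0)) => D2 nz2 h2.
have e1 : (0, vec 1 0 0, vec 0 0 0, 0) *~ D1 = (0, vec D1%:~R 0 0, vec 0 0 0, 0) :> zornQ.
  by rewrite zornzE /= mul0rz !vec_z !(mulr0, mulr1).
have e2 : (0, vec 0 0 0, vec 0 1 0, 0) *~ D2 = (0, vec 0 0 0, vec 0 D2%:~R 0, 0) :> zornQ.
  by rewrite zornzE /= mul0rz !vec_z !(mulr0, mulr1).
rewrite e1 in h1; rewrite e2 in h2.
have a0 : (D1%:~R : rat) != 0 by rewrite intr_eq0.
have b0 : (D2%:~R : rat) != 0 by rewrite intr_eq0.
have Hin p : fZ D1%:~R D2%:~R p \in O.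
  by rewrite fZ_dec; apply: (HD _ _); [apply: (HD _ _) => //|]; apply: (HMz _ _).
exists (fZ D1%:~R D2%:~R); split.
- exact: fZ_inj.
- move=> p; split => //; exists (fZ D1%:~R D2%:~R (- p.1, - p.2)) => //.
  by rewrite -!fZ_mul /= !subrr addrC subrr addNr fZ0.
- by move=> p q; rewrite fZ_mul.
Qed.
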